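(* Fix $n\ge2$. The valuation distribution is not identified from the equilibrium bid distribution: there exist two model structures $(u,F_0,D)$ and $(\tilde u,\tilde F_0,\tilde D)$, both satisfying the assumptions in the context, with $F_0\ne\tilde F_0$, whose symmetric equilibria induce the same distribution $G(\cdot\mid n)$ of equilibrium bids.
   Context: A model structure $(u,F_0,D)$ for a first-price auction (no reserve price) with $n\ge2$ bidders consists of: a utility $u:\mathbb R_+\to\mathbb R_+$ with $u'>0$, $u''\le0$, $u(0)=0$; a valuation distribution $F_0$ on $[\underline v,\overline v]$ with continuous density $f_0>0$, from which the $n$ values are drawn i.i.d.; and a function $D(\gamma)=F^*(F_0^{-1}(\gamma))$, where bidders have maxmin expected utility over a weakly compact convex set $\Gamma$ of strictly increasing $C^1$ distributions on $[\underline v,\overline v]$ containing $F_0$ with least element $F^*\in\Gamma$ ($F^*\le F$ pointwise for all $F\in\Gamma$) having density $f^*>0$. A symmetric equilibrium is a strictly increasing $\beta_n$ such that for every value $v$, $x=v$ maximizes $u[v-\beta_n(x)]D[F_0(x)]^{n-1}$. The bid distribution is $G(b\mid n)=F_0(\beta_n^{-1}(b))$, the distribution of $\beta_n(v)$ for $v\sim F_0$. *)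

(* Defs.v *)
From Stdlib Require Import Reals Lra.
Open Scope R_scope.

Definition cdf_on (vl vh : R) (F : R -> R) : Prop :=
  (forall x, x <= vl -> F x = 0) /\ (forall x, vh <= x -> F x = 1).

Definition C1_density_on (vl vh : R) (F f : R -> R) : Prop :=
  (forall x, continuity_pt F x) /\
  (forall x, vl < x < vh -> derivable_pt_lim F x (f x)) /\
  (forall x, vl <= x <= vh ->
     limit1_in f (fun y => vl <= y <= vh) (f x) x).

Definition strictly_increasing_on (vl vh : R) (F : R -> R) : Prop :=
  forall x y, vl <= x -> x < y -> y <= vh -> F x < F y.

Definition C1_strict_cdf (vl vh : R) (F : R -> R) : Prop :=
  cdf_on vl vh F /\ strictly_increasing_on vl vh F /\
  exists f, C1_density_on vl vh F f.

Definition pos_density_cdf (vl vh : R) (F : R -> R) : Prop :=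
  cdf_on vl vh F /\
  exists f, C1_density_on vl vh F f /\ (forall x, vl <= x <= vh -> f x > 0).

Definition general_cdf_on (vl vh : R) (H : R -> R) : Prop :=
  (forall x, x < vl -> H x = 0) /\ (forall x, vh <= x -> H x = 1) /\
  (forall x y, x <= y -> H x <= H y) /\
  (forall x, limit1_in H (fun y => x < y) (H x) x).

(* Weak compactness of a set of probability measures on the compact
   interval [vl,vh]: by Prokhorov/Helly the space of all such measures is
   weakly (sequentially) compact and metrizable, so weak compactness of Gam
   amounts to weak sequential closedness: whenever a sequence in Gam
   converges weakly (i.e. at all continuity points of the limit cdf) to a
   distribution H on [vl,vh], then H belongs to Gam. *)
Definition weakly_compact (vl vh : R) (Gam : (R -> R) -> Prop) : Prop :=
  forall (Fk : nat -> R -> R) (H : R -> R),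
    (forall k, Gam (Fk k)) -> general_cdf_on vl vh H ->
    (forall x, continuity_pt H x -> Un_cv (fun k => Fk k x) (H x)) ->
    Gam H.

Definition convex_set (Gam : (R -> R) -> Prop) : Prop :=
  forall F G t, Gam F -> Gam G -> 0 <= t <= 1 ->
    Gam (fun x => t * F x + (1 - t) * G x).

(* Utility u : R+ -> R+ with u' > 0, u'' <= 0, u(0) = 0.  u is given on all
   of R (values at negative surplus must be specified for the deviation
   problem); we require it strictly increasing there, so that negative
   surplus gives negative utility. *)
Definition utility_ok (u : R -> R) : Prop :=
  u 0 = 0 /\ (forall x, 0 <= x -> 0 <= u x) /\
  (forall x y, x < y -> u x < u y) /\
  exists u1 u2 : R -> R, forall x, 0 <= x ->
    derivable_pt_lim u x (u1 x) /\ u1 x > 0 /\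
    derivable_pt_lim u1 x (u2 x) /\ u2 x <= 0.

(* (u, F0, D) is a model structure with support [vl,vh]:
   D(gamma) = F*(F0^{-1}(gamma)), encoded as D (F0 x) = F* x on [vl,vh]. *)
Definition model_structure (vl vh : R) (u F0 D : R -> R) : Prop :=
  vl < vh /\ utility_ok u /\ pos_density_cdf vl vh F0 /\
  exists (Gam : (R -> R) -> Prop) (Fs : R -> R),
    (forall F, Gam F -> C1_strict_cdf vl vh F) /\
    weakly_compact vl vh Gam /\ convex_set Gam /\
    Gam F0 /\ Gam Fs /\ (forall F, Gam F -> forall x, Fs x <= F x) /\
    pos_density_cdf vl vh Fs /\
    (forall x, vl <= x <= vh -> D (F0 x) = Fs x).

Definition sym_equilibrium (n : nat) (vl vh : R) (u F0 D beta : R -> R) : Prop :=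
  strictly_increasing_on vl vh beta /\
  forall v x, vl <= v <= vh -> vl <= x <= vh ->
    u (v - beta x) * (D (F0 x)) ^ (n - 1) <= u (v - beta v) * (D (F0 v)) ^ (n - 1).

(* G(b) = Pr(beta(V) <= b), V ~ F0; for strictly increasing beta and
   continuous F0 this is the sup of F0 v over {v in [vl,vh] | beta v <= b}
   (or 0 if that set is empty). *)
Definition bid_cdf_value (vl vh : R) (F0 beta : R -> R) (b g : R) : Prop :=
  is_lub (fun y => y = 0 \/ exists v, vl <= v <= vh /\ beta v <= b /\ y = F0 v) g.

(* Main.v *)
Require Import Defs.
From Stdlib Require Import Reals Lra FunctionalExtensionality.
From Coquelicot Require Import Coquelicot.
Open Scope R_scope.

Definition proj (a b x : R) := Rmax a (Rmin b x).

Lemma proj_id a b x : a <= x <= b -> proj a b x = x.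
Proof. intros. unfold proj, Rmax, Rmin. repeat destruct Rle_dec; lra. Qed.
Lemma proj_lo a b x : a <= b -> x <= a -> proj a b x = a.
Proof. intros. unfold proj, Rmax, Rmin. repeat destruct Rle_dec; lra. Qed.
Lemma proj_hi a b x : a <= b -> b <= x -> proj a b x = b.
Proof. intros. unfold proj, Rmax, Rmin. repeat destruct Rle_dec; lra. Qed.
Lemma proj_in a b x : a <= b -> a <= proj a b x <= b.
Proof. intros. unfold proj, Rmax, Rmin. repeat destruct Rle_dec; lra. Qed.
Lemma proj_lip a b x z : a <= b -> Rabs (proj a b x - proj a b z) <= Rabs (x - z).
Proof. intros. unfold proj, Rmax, Rmin. repeat destruct Rle_dec; split_Rabs; lra. Qed.

Lemma proj_cont a b x : a <= b -> continuity_pt (proj a b) x.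
Proof.
  intros Hab. unfold continuity_pt, continue_in, limit1_in, limit_in.
  intros eps Heps. exists eps. split; [lra|]. intros z [_ Hz].
  simpl in *. unfold R_dist in *. eapply Rle_lt_trans; [apply proj_lip|]; lra.
Qed.

Lemma cont_restrict f x D : continuity_pt f x -> limit1_in f D (f x) x.
Proof.
  unfold continuity_pt, continue_in, limit1_in, limit_in. intros H eps Heps.
  destruct (H eps Heps) as [d [Hd Hf]]. exists d. split; auto.
  intros z [_ Hz]. destruct (Req_dec z x) as [->|Hne].
  - simpl. unfold R_dist. rewrite Rminus_diag, Rabs_R0. lra.
  - apply Hf. split; auto. split; [exact I|]. auto.
Qed.

Lemma clip_C1 a b h h' : a < b ->
  (forall x, a <= x <= b -> continuity_pt h x) ->
  (forall x, a < x < b -> derivable_pt_lim h x (h' x)) ->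
  (forall x, a <= x <= b -> continuity_pt h' x) ->
  C1_density_on a b (fun x => h (proj a b x)) h'.
Proof.
  intros Hab Hc Hd Hc'. split; [|split].
  - intros x. apply (continuity_pt_comp (proj a b) h x).
    + apply proj_cont; lra.
    + apply Hc, proj_in; lra.
  - intros x Hx eps Heps. destruct (Hd x Hx eps Heps) as [d Hdd].
    assert (Hp : 0 < Rmin d (Rmin (x - a) (b - x))).
    { destruct d as [d dp]; simpl. repeat apply Rmin_pos; lra. }
    exists (mkposreal _ Hp). intros h0 Hh0 Hlt. simpl in Hlt.
    rewrite (proj_id a b x) by lra.
    assert (Hm1 := Rmin_l d (Rmin (x - a) (b - x))).
    assert (Hm2 := Rmin_r d (Rmin (x - a) (b - x))).
    assert (Hm3 := Rmin_l (x - a) (b - x)).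
    assert (Hm4 := Rmin_r (x - a) (b - x)).
    rewrite (proj_id a b (x + h0)).
    + apply Hdd; auto. lra.
    + revert Hlt; split_Rabs; lra.
  - intros x Hx. apply cont_restrict, Hc'; auto.
Qed.

Lemma amgm (m : nat) (w y : R) : 0 <= w -> 0 <= y ->
  INR (S m) * w * y ^ m - INR m * y ^ (S m) <= w ^ (S m).
Proof.
  intros Hw Hy. induction m as [|m IH].
  - change (INR 1) with 1; change (INR 0) with 0; simpl; lra.
  - rewrite S_INR. rewrite (S_INR m) in IH.
    assert (HY : 0 <= y ^ m) by (apply pow_le; auto).
    change (w ^ S (S m)) with (w * w ^ S m).
    change (y ^ S (S m)) with (y * (y * y ^ m)).
    change (y ^ S m) with (y * y ^ m) in *.
    change (w ^ S m) with (w * w ^ m) in *.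
    assert (H1 := Rmult_le_compat_l w _ _ Hw IH).
    assert (H2 : 0 <= (INR m + 1) * y ^ m * ((w - y) * (w - y))).
    { apply Rmult_le_pos; [|apply Rle_0_sqr]. apply Rmult_le_pos; auto. pose proof (pos_INR m); lra. }
    rewrite S_INR. match goal with |- ?L <= _ => assert (E : L = w * ((INR m + 1) * w * y ^ m - INR m * (y * y ^ m)) - (INR m + 1) * y ^ m * ((w - y) * (w - y))) by ring end.
    lra.
Qed.

Section Bisect.
Variable H : R -> R.
Hypothesis Hmono : forall x y, x <= y -> H x <= H y.

Definition step (p : R * R) : R * R :=
  let a := fst p in let b := snd p in
  let p1 := a + (b - a) / 4 in let p2 := a + (b - a) / 2 in
  let p3 := a + 3 * (b - a) / 4 in
  if Rle_dec (H p2 - H p1) (H p3 - H p2) then (p1, p2) else (p2, p3).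

Variables a0 b0 : R.
Hypothesis Hab0 : a0 < b0.

Fixpoint sq (k : nat) : R * R :=
  match k with O => (a0, b0) | S k => step (sq k) end.

Lemma step_props p : fst p < snd p ->
  fst p < fst (step p) /\ fst (step p) < snd (step p) /\ snd (step p) < snd p /\
  H (snd (step p)) - H (fst (step p)) <= (H (snd p) - H (fst p)) / 2.
Proof.
  destruct p as [a b]; simpl; intros Hab. unfold step; simpl.
  assert (H1 := Hmono a (a + (b - a) / 4) ltac:(lra)).
  assert (H4 := Hmono (a + 3 * (b - a) / 4) b ltac:(lra)).
  destruct Rle_dec; simpl; repeat split; lra.
Qed.

Lemma sq_lt k : fst (sq k) < snd (sq k).
Proof. induction k; simpl; [exact Hab0|]. apply step_props; auto. Qed.

Lemma sq_S k : fst (sq k) < fst (sq (S k)) /\ snd (sq (S k)) < snd (sq k) /\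
  H (snd (sq (S k))) - H (fst (sq (S k))) <= (H (snd (sq k)) - H (fst (sq k))) / 2.
Proof. simpl. destruct (step_props (sq k) (sq_lt k)) as [A [B [C D]]]; auto. Qed.

Lemma sq_a_mono i j : (i <= j)%nat -> fst (sq i) <= fst (sq j).
Proof. induction 1; [lra|]. destruct (sq_S m); lra. Qed.
Lemma sq_b_mono i j : (i <= j)%nat -> snd (sq j) <= snd (sq i).
Proof. induction 1; [lra|]. destruct (sq_S m) as [_ [? _]]; lra. Qed.

Lemma sq_ab i j : fst (sq i) < snd (sq j).
Proof.
  destruct (Nat.le_ge_cases i j) as [h|h].
  - pose proof (sq_a_mono _ _ h); pose proof (sq_lt j); lra.
  - pose proof (sq_b_mono _ _ h); pose proof (sq_lt i); lra.
Qed.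

Lemma sq_diff k : H (snd (sq k)) - H (fst (sq k)) <= (H b0 - H a0) * (/2) ^ k.
Proof.
  induction k; simpl; [lra|].
  destruct (sq_S k) as [_ [_ D]]. simpl in D. lra.
Qed.

Lemma cont_point_exists : exists y, a0 < y < b0 /\ continuity_pt H y.
Proof.
  set (E := fun z => exists k, z = fst (sq k)).
  assert (Hb : bound E). { exists b0. intros z [k ->]. pose proof (sq_ab k 0); simpl in *; lra. }
  assert (He : exists z, E z) by (exists a0; exists 0%nat; reflexivity).
  destruct (completeness E Hb He) as [y [Hub Hlub]].
  assert (Hin : forall k, fst (sq k) < y < snd (sq k)).
  { intros k. destruct (sq_S k) as [A [B _]]. split.
    - apply Rlt_le_trans with (fst (sq (S k))); auto. apply Hub. exists (S k); auto.
    - apply Rle_lt_trans with (snd (sq (S k))); auto. apply Hlub.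
      intros z [j ->]. left. apply sq_ab. }
  exists y. split; [apply (Hin 0%nat)|].
  unfold continuity_pt, continue_in, limit1_in, limit_in. intros eps Heps.
  assert (HM : 0 <= H b0 - H a0) by (pose proof (Hmono a0 b0); lra).
  destruct (pow_lt_1_zero (/2) ltac:(rewrite Rabs_pos_eq; lra) (eps / (H b0 - H a0 + 1)))
    as [N HN].
  { apply Rdiv_lt_0_compat; lra. }
  specialize (HN N (le_n N)). rewrite Rabs_pos_eq in HN by (apply pow_le; lra).
  destruct (Hin N) as [L R0].
  exists (Rmin (y - fst (sq N)) (snd (sq N) - y)). split.
  { apply Rmin_pos; lra. }
  intros z [_ Hz]. simpl in *. unfold R_dist in *.
  assert (Hm1 := Rmin_l (y - fst (sq N)) (snd (sq N) - y)).
  assert (Hm2 := Rmin_r (y - fst (sq N)) (snd (sq N) - y)).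
  assert (Hz1 : fst (sq N) <= z <= snd (sq N)) by (revert Hz; split_Rabs; lra).
  pose proof (Hmono _ _ (proj1 Hz1)). pose proof (Hmono _ _ (proj2 Hz1)).
  pose proof (Hmono (fst (sq N)) y ltac:(lra)). pose proof (Hmono y (snd (sq N)) ltac:(lra)).
  pose proof (sq_diff N).
  assert (Hp : (H b0 - H a0) * (/ 2) ^ N < eps).
  { apply Rmult_lt_compat_l with (r := H b0 - H a0 + 1) in HN; [|lra].
    unfold Rdiv in HN. rewrite <- Rmult_assoc, Rinv_r_simpl_m in HN by lra.
    pose proof (pow_le (/2) N ltac:(lra)). nra. }
  split_Rabs; lra.
Qed.
End Bisect.

Lemma agree_cont (H F : R -> R) :
  (forall x y, x <= y -> H x <= H y) -> (forall x, continuity_pt F x) ->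
  (forall y, continuity_pt H y -> H y = F y) -> forall x, H x = F x.
Proof.
  intros Hm Fc Hag x.
  destruct (Rtotal_order (H x) (F x)) as [Hlt|[Heq|Hgt]]; auto; exfalso.
  - destruct (Fc x (F x - H x) ltac:(lra)) as [d [Hd Hf]].
    destruct (cont_point_exists H Hm (x - d) x ltac:(lra)) as [y [Hy Hc]].
    pose proof (Hm y x ltac:(lra)) as H0. rewrite (Hag y Hc) in H0.
    assert (Hfy : R_dist (F y) (F x) < F x - H x).
    { apply Hf. split. split; [exact I|lra]. simpl; unfold R_dist; split_Rabs; lra. }
    unfold R_dist in Hfy. revert Hfy; split_Rabs; lra.
  - destruct (Fc x (H x - F x) ltac:(lra)) as [d [Hd Hf]].
    destruct (cont_point_exists H Hm x (x + d) ltac:(lra)) as [y [Hy Hc]].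
    pose proof (Hm x y ltac:(lra)). rewrite (Hag y Hc) in H0.
    assert (Hfy : R_dist (F y) (F x) < H x - F x).
    { apply Hf. split. split; [exact I|lra]. simpl; unfold R_dist; split_Rabs; lra. }
    unfold R_dist in Hfy. revert Hfy; split_Rabs; lra.
Qed.

Lemma cv_const c : Un_cv (fun _ : nat => c) c.
Proof. intros e He. exists 0%nat. intros. unfold R_dist. rewrite Rminus_diag, Rabs_R0. lra. Qed.

Lemma cv_bounds t l : Un_cv t l -> (forall k, 0 <= t k <= 1) -> 0 <= l <= 1.
Proof.
  intros Hc Hb. split.
  - destruct (Rle_lt_dec 0 l) as [h|h]; auto. exfalso.
    destruct (Hc (- l) ltac:(lra)) as [N HN]. specialize (HN N (le_n N)). specialize (Hb N).
    unfold R_dist in HN. revert HN; split_Rabs; lra.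
  - destruct (Rle_lt_dec l 1) as [h|h]; auto. exfalso.
    destruct (Hc (l - 1) ltac:(lra)) as [N HN]. specialize (HN N (le_n N)). specialize (Hb N).
    unfold R_dist in HN. revert HN; split_Rabs; lra.
Qed.

Lemma lub_unique (E E' : R -> Prop) g g' : (forall z, E z <-> E' z) ->
  is_lub E g -> is_lub E' g' -> g = g'.
Proof.
  intros Heq [U1 L1] [U2 L2]. apply Rle_antisym.
  - apply L1. intros z Hz. apply U2, Heq; auto.
  - apply L2. intros z Hz. apply U1, Heq; auto.
Qed.

Lemma wc_single vl vh F0 : (forall x, continuity_pt F0 x) ->
  weakly_compact vl vh (fun F => F = F0).
Proof.
  intros Fc Fk H HF Hgen Hcv. destruct Hgen as [_ [_ [Hm _]]].
  apply functional_extensionality. apply agree_cont; auto.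
  intros y Hy. specialize (Hcv y Hy).
  replace (fun k => Fk k y) with (fun _ : nat => F0 y) in Hcv
    by (apply functional_extensionality; intro k; rewrite HF; auto).
  symmetry. eapply UL_sequence; [apply cv_const|exact Hcv].
Qed.

Definition comb (F0 Fs : R -> R) (t : R) := fun x => t * F0 x + (1 - t) * Fs x.
Definition seg (F0 Fs : R -> R) := fun F => exists t, 0 <= t <= 1 /\ F = comb F0 Fs t.

Lemma seg_convex F0 Fs : convex_set (seg F0 Fs).
Proof.
  intros F G s [t1 [h1 ->]] [t2 [h2 ->]] hs.
  exists (s * t1 + (1 - s) * t2). split.
  { assert (0 <= s*t1) by (apply Rmult_le_pos; lra). assert (0 <= (1-s)*t2) by (apply Rmult_le_pos; lra).
    assert (s*t1 <= s*1) by (apply Rmult_le_compat_l; lra).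
    assert ((1-s)*t2 <= (1-s)*1) by (apply Rmult_le_compat_l; lra). split; lra. }
  apply functional_extensionality; intro x; unfold comb; ring.
Qed.

Lemma comb_cont F0 Fs t x : continuity_pt F0 x -> continuity_pt Fs x -> continuity_pt (comb F0 Fs t) x.
Proof.
  intros. unfold comb.
  apply (continuity_pt_plus (fun x => t * F0 x) (fun x => (1 - t) * Fs x));
  [apply (continuity_pt_scal F0 t)|apply (continuity_pt_scal Fs (1 - t))]; auto.
Qed.

Lemma wc_seg vl vh F0 Fs : vl < vh -> (forall x, continuity_pt F0 x) -> (forall x, continuity_pt Fs x) ->
  (forall x, vl < x < vh -> Fs x < F0 x) -> weakly_compact vl vh (seg F0 Fs).
Proof.
  intros Hv Fc Sc Hlt Fk H HF Hgen Hcv. destruct Hgen as [_ [_ [Hm _]]].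
  destruct (cont_point_exists H Hm vl vh Hv) as [y [Hy Hcy]].
  set (dy := F0 y - Fs y). assert (Hdy : 0 < dy) by (unfold dy; pose proof (Hlt y Hy); lra).
  set (t := fun k => (Fk k y - Fs y) / dy).
  assert (Ht : forall k, 0 <= t k <= 1 /\ forall z, Fk k z = Fs z + t k * (F0 z - Fs z)).
  { intros k. destruct (HF k) as [s [hs Hk]].
    assert (ts : t k = s) by (unfold t; rewrite Hk; unfold comb; unfold dy in *; field; lra).
    rewrite ts. split; auto. intros z; rewrite Hk; unfold comb; ring. }
  set (ts := (H y - Fs y) / dy).
  assert (Htc : Un_cv t ts).
  { unfold t, ts. unfold Rdiv.
    apply (CV_mult (fun k => Fk k y - Fs y) (fun _ => / dy)); [|apply cv_const].
    apply (CV_plus (fun k => Fk k y) (fun _ => - Fs y)); [apply Hcv; auto|apply cv_const]. }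
  assert (Hb := cv_bounds t ts Htc (fun k => proj1 (Ht k))).
  exists ts. split; auto.
  apply functional_extensionality. apply agree_cont; auto.
  - intros x; apply comb_cont; auto.
  - intros z Hz. specialize (Hcv z Hz).
    replace (fun k => Fk k z) with (fun k => Fs z + t k * (F0 z - Fs z)) in Hcv
      by (apply functional_extensionality; intro k; rewrite (proj2 (Ht k)); auto).
    assert (Hc2 : Un_cv (fun k => Fs z + t k * (F0 z - Fs z)) (Fs z + ts * (F0 z - Fs z))).
    { apply (CV_plus (fun _ => Fs z) (fun k => t k * (F0 z - Fs z))); [apply cv_const|].
      apply (CV_mult t (fun _ => F0 z - Fs z)); [auto|apply cv_const]. }
    rewrite (UL_sequence _ _ _ Hcv Hc2). unfold comb; ring.
Qed.

Section S2.
Variable N : R.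
Hypothesis HN : 2 <= N.

Definition yv x := x / (1 - x).
Definition Qf x := (N + (N - 1) * (x / (1 - x))) / (N * N).
Definition Ef x := exp (ln ((N + (N - 1) * (x / (1 - x))) / (N * N)) / (N - 1)).
Definition hs x := (x / (1 - x)) / N * exp (ln ((N + (N - 1) * (x / (1 - x))) / (N * N)) / (N - 1)).
Definition fs x := exp (ln ((N + (N - 1) * (x / (1 - x))) / (N * N)) / (N - 1)) / ((1 - x) * (1 - x) * (N - x)).

Lemma Qf_pos x : 0 <= x < 1 -> 0 < (N + (N - 1) * (x / (1 - x))) / (N * N).
Proof.
  intros Hx. apply Rdiv_lt_0_compat; [|nra].
  assert (0 <= x / (1 - x)) by (apply Rdiv_le_0_compat; lra). nra.
Qed.

Lemma hs_derive x : 0 <= x < 1 -> is_derive hs x (fs x).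
Proof.
  intros Hx. pose proof (Qf_pos x Hx). unfold hs, fs. auto_derive.
  - repeat split; try lra. exact H.
  - set (E := exp _). field. repeat split; lra.
Qed.

Lemma fs_cont x : 0 <= x < 1 -> continuity_pt fs x.
Proof.
  intros Hx. pose proof (Qf_pos x Hx). apply continuity_pt_filterlim.
  apply (ex_derive_continuous fs). unfold fs. auto_derive.
  repeat split; try lra; try exact H. apply Rgt_not_eq, Rmult_lt_0_compat; [apply Rmult_lt_0_compat|]; lra.
Qed.

Lemma hs_cont x : 0 <= x < 1 -> continuity_pt hs x.
Proof.
  intros Hx. apply continuity_pt_filterlim.
  apply (ex_derive_continuous hs). eexists. apply hs_derive; auto.
Qed.

Lemma fs_pos x : 0 <= x < 1 -> fs x > 0.
Proof.
  intros Hx. unfold fs. apply Rdiv_lt_0_compat; [apply exp_pos|].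
  apply Rmult_lt_0_compat; [nra|lra].
Qed.

Definition h2 x := N * x / (N - x).
Definition f2 x := N * N / ((N - x) * (N - x)).

Lemma h2_derive x : x < N -> is_derive h2 x (f2 x).
Proof. intros Hx. unfold h2, f2. auto_derive; [lra|]. field. lra. Qed.

Lemma h2_cont x : x < N -> continuity_pt h2 x.
Proof.
  intros Hx. apply continuity_pt_filterlim.
  apply (ex_derive_continuous h2). eexists. apply h2_derive; auto.
Qed.

Lemma f2_cont x : x < N -> continuity_pt f2 x.
Proof.
  intros Hx. apply continuity_pt_filterlim.
  apply (ex_derive_continuous f2). unfold f2. auto_derive. nra.
Qed.

Lemma f2_pos x : x < N -> f2 x > 0.
Proof. intros. unfold f2. apply Rdiv_lt_0_compat; nra. Qed.


Definition vh := N / (N + 1).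
Lemma vh_bounds : 0 < vh < 1.
Proof. unfold vh. split; [apply Rdiv_lt_0_compat; lra|]. apply Rmult_lt_reg_r with (N+1); [lra|].
  unfold Rdiv. rewrite Rmult_assoc, Rinv_l by lra. lra. Qed.

Lemma hs0 : hs 0 = 0.
Proof. unfold hs. unfold Rdiv. rewrite !Rmult_0_l. ring. Qed.

Lemma hs_vh : hs vh = 1.
Proof.
  unfold hs, vh.
  replace (N / (N + 1) / (1 - N / (N + 1))) with N by (field; lra).
  replace ((N + (N - 1) * N) / (N * N)) with 1 by (field; lra).
  rewrite ln_1. unfold Rdiv at 2. rewrite Rmult_0_l, exp_0. field. lra.
Qed.

Lemma h2_0 : h2 0 = 0.
Proof. unfold h2. unfold Rdiv. ring. Qed.
Lemma h2_vh : h2 vh = 1.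
Proof. unfold h2, vh. field. split; [lra|]. assert (N * N > 0) by (apply Rmult_lt_0_compat; lra). lra. Qed.

Lemma frac_lt a b c d : 0 < b -> 0 < d -> a * d < c * b -> a / b < c / d.
Proof.
  intros. replace (a / b) with ((a * d) * / (b * d)) by (field; lra).
  replace (c / d) with ((c * b) * / (b * d)) by (field; lra).
  apply Rmult_lt_compat_r; auto. apply Rinv_0_lt_compat, Rmult_lt_0_compat; auto.
Qed.

Lemma h2_incr x y : 0 <= x -> x < y -> y <= vh -> h2 x < h2 y.
Proof.
  intros. pose proof vh_bounds. unfold h2. apply frac_lt; try lra. assert (0 < N*N*(y-x)) by (apply Rmult_lt_0_compat; [apply Rmult_lt_0_compat|]; lra). lra.
Qed.

Lemma yv_incr x y : 0 <= x -> x < y -> y < 1 -> x / (1 - x) < y / (1 - y).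
Proof. intros. apply frac_lt; lra. Qed.

Lemma Ef_incr x y : 0 <= x -> x < y -> y < 1 ->
  exp (ln ((N + (N - 1) * (x / (1 - x))) / (N * N)) / (N - 1)) <
  exp (ln ((N + (N - 1) * (y / (1 - y))) / (N * N)) / (N - 1)).
Proof.
  intros. apply exp_increasing. unfold Rdiv at 1 3. apply Rmult_lt_compat_r.
  { apply Rinv_0_lt_compat; lra. }
  apply ln_increasing; [apply Qf_pos; lra|].
  unfold Rdiv. apply Rmult_lt_compat_r. { apply Rinv_0_lt_compat; nra. }
  pose proof (yv_incr x y). nra.
Qed.

Lemma hs_incr x y : 0 <= x -> x < y -> y < 1 -> hs x < hs y.
Proof.
  intros. unfold hs. pose proof (Ef_incr x y H H0 H1).
  set (Ex := exp (ln ((N + (N - 1) * (x / (1 - x))) / (N * N)) / (N - 1))) in *.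
  set (Ey := exp (ln ((N + (N - 1) * (y / (1 - y))) / (N * N)) / (N - 1))) in *.
  assert (0 < Ex) by apply exp_pos.
  pose proof (yv_incr x y H H0 H1).
  assert (Ha : x / (1 - x) / N < y / (1 - y) / N).
  { unfold Rdiv at 1 3. apply Rmult_lt_compat_r; auto. apply Rinv_0_lt_compat; lra. }
  assert (Ha0 : 0 <= x / (1 - x) / N) by (apply Rdiv_le_0_compat; [apply Rdiv_le_0_compat|]; lra).
  apply Rle_lt_trans with (x / (1 - x) / N * Ey).
  - apply Rmult_le_compat_l; lra.
  - apply Rmult_lt_compat_r; lra.
Qed.

Lemma Q_eq x : 0 <= x < 1 -> (N + (N - 1) * (x / (1 - x))) / (N * N) = (N - x) / ((1 - x) * (N * N)).
Proof. intros. field. split; lra. Qed.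

Lemma hs_le_h2 x : 0 <= x <= vh -> hs x <= h2 x /\ (0 < x < vh -> hs x < h2 x).
Proof.
  intros Hx. pose proof vh_bounds as Hvh.
  assert (Hx1 : 0 <= x < 1) by lra.
  pose proof (Qf_pos x Hx1) as HQ.
  assert (HNN : 0 < N * N) by (apply Rmult_lt_0_compat; lra).
  assert (Hxv : x * (N + 1) <= N /\ (x < vh -> x * (N + 1) < N)).
  { unfold vh in *. split.
    - apply Rmult_le_reg_r with (/ (N+1)); [apply Rinv_0_lt_compat; lra|].
      rewrite Rmult_assoc, Rinv_r by lra. lra.
    - intros h. apply Rmult_lt_reg_r with (/ (N+1)); [apply Rinv_0_lt_compat; lra|].
      rewrite Rmult_assoc, Rinv_r by lra. lra. }
  assert (Hpr : 0 < (1 - x) * (N * N)) by (apply Rmult_lt_0_compat; lra).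
  set (Q := (N + (N - 1) * (x / (1 - x))) / (N * N)) in *.
  assert (HQe : Q = (N - x) / ((1 - x) * (N * N))) by (unfold Q; apply Q_eq; lra).
  assert (HQ1 : Q <= 1 /\ (x < vh -> Q < 1)).
  { rewrite HQe. split.
    - assert (0 <= (N - 1) * (N - x * (N + 1))) by (apply Rmult_le_pos; lra).
      apply Rmult_le_reg_r with ((1 - x) * (N * N)); auto.
      unfold Rdiv. rewrite Rmult_assoc, Rinv_l by lra. lra.
    - intros h. assert (0 < (N - 1) * (N - x * (N + 1))) by (apply Rmult_lt_0_compat; [lra|]; specialize (proj2 Hxv h); lra).
      apply Rmult_lt_reg_r with ((1 - x) * (N * N)); auto.
      unfold Rdiv. rewrite Rmult_assoc, Rinv_l by lra. lra. }
  assert (HL : ln Q <= 0 /\ (x < vh -> ln Q < 0)).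
  { split.
    - destruct (proj1 HQ1) as [h|h].
      + rewrite <- ln_1. left. apply ln_increasing; lra.
      + rewrite h, ln_1; lra.
    - intros h. rewrite <- ln_1. apply ln_increasing; [lra|]. apply HQ1; auto. }
  assert (HiN : 0 < / (N - 1)) by (apply Rinv_0_lt_compat; lra).
  assert (HE : exp (ln Q / (N - 1)) <= / Q /\ (x < vh -> exp (ln Q / (N - 1)) < / Q)).
  { rewrite <- (exp_ln (/ Q)) by (apply Rinv_0_lt_compat; lra). rewrite ln_Rinv by lra.
    unfold Rdiv. split.
    - destruct (proj1 HL) as [h|h].
      + left. apply exp_increasing.
        assert (0 < (- ln Q) * / (N - 1)) by (apply Rmult_lt_0_compat; lra). lra.
      + rewrite h. right. f_equal. ring.
    - intros h. apply exp_increasing. specialize (proj2 HL h); intros h'.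
      assert (0 < (- ln Q) * / (N - 1)) by (apply Rmult_lt_0_compat; lra). lra. }
  assert (Hh2 : h2 x = x / (1 - x) / N * / Q).
  { rewrite HQe. unfold h2. field. repeat split; lra. }
  assert (Hc : 0 <= x / (1 - x) / N) by (apply Rdiv_le_0_compat; [apply Rdiv_le_0_compat|]; lra).
  unfold hs. fold Q. rewrite Hh2. split.
  - apply Rmult_le_compat_l; auto. apply HE.
  - intros h. apply Rmult_lt_compat_l; [|apply HE; lra].
    apply Rdiv_lt_0_compat; [apply Rdiv_lt_0_compat|]; lra.
Qed.

End S2.

Lemma exp_pow a m : exp a ^ m = exp (INR m * a).
Proof.
  induction m; simpl pow. - simpl. rewrite Rmult_0_l, exp_0; auto.
  - rewrite IHm, <- exp_plus, S_INR. f_equal; ring.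
Qed.

Lemma hs_pow m x : (1 <= m)%nat -> 0 <= x < 1 ->
  hs (INR (S m)) x ^ m = (x / (1 - x)) ^ m * (/ INR (S m)) ^ m *
     ((INR (S m) + (INR (S m) - 1) * (x / (1 - x))) / (INR (S m) * INR (S m))).
Proof.
  intros Hm Hx. set (N := INR (S m)).
  assert (HN : 2 <= N) by (unfold N; rewrite S_INR; apply le_INR in Hm; simpl in Hm; lra).
  unfold hs. fold N. replace (x / (1 - x) / N) with (x / (1 - x) * / N) by reflexivity.
  rewrite !Rpow_mult_distr, exp_pow.
  replace (INR m * (ln ((N + (N - 1) * (x / (1 - x))) / (N * N)) / (N - 1)))
    with (ln ((N + (N - 1) * (x / (1 - x))) / (N * N))).
  - rewrite exp_ln; [ring|]. apply Qf_pos; lra.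
  - unfold N. rewrite S_INR. field. apply le_INR in Hm; simpl in Hm; lra.
Qed.

Lemma eq2 m v x : (1 <= m)%nat ->
  0 <= v <= vh (INR (S m)) -> 0 <= x <= vh (INR (S m)) ->
  (v - (INR (S m) - 1) * x / (INR (S m) - x)) * hs (INR (S m)) x ^ m <=
  (v - (INR (S m) - 1) * v / (INR (S m) - v)) * hs (INR (S m)) v ^ m.
Proof.
  intros Hm Hv Hx.
  assert (HN : 2 <= INR (S m)) by (rewrite S_INR; apply le_INR in Hm; simpl in Hm; lra).
  pose proof (vh_bounds _ HN) as Hvh.
  rewrite !hs_pow by (auto; lra). set (N := INR (S m)) in *.
  set (y := x / (1 - x)). set (w := v / (1 - v)).
  assert (Hy : 0 <= y) by (unfold y; apply Rdiv_le_0_compat; lra).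
  assert (Hw : 0 <= w) by (unfold w; apply Rdiv_le_0_compat; lra).
  set (A := (/ N) ^ m).
  assert (HA : 0 <= A) by (unfold A; apply pow_le; left; apply Rinv_0_lt_compat; lra).
  set (P := y ^ m). set (K := A * (1 - v) / (N * N)).
  assert (HK : 0 <= K) by (unfold K; apply Rdiv_le_0_compat; [apply Rmult_le_pos; lra|]; apply Rmult_lt_0_compat; lra).
  assert (E1 : (v - (N - 1) * x / (N - x)) * (P * A * ((N + (N - 1) * y) / (N * N)))
           = K * (N * w * P - (N - 1) * (y * P))).
  { unfold K, y, w. field. repeat split; lra. }
  assert (E2 : (v - (N - 1) * v / (N - v)) * (w ^ m * A * ((N + (N - 1) * w) / (N * N)))
           = K * (w * w ^ m)).
  { unfold K, w. field. repeat split; lra. }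
  rewrite E1, E2. apply Rmult_le_compat_l; auto.
  pose proof (amgm m w y Hw Hy) as Ham. fold N in Ham.
  assert (HmN : INR m = N - 1) by (unfold N; rewrite S_INR; ring).
  rewrite HmN in Ham. simpl pow in Ham. fold P in Ham. lra.
Qed.

Lemma eq1 m v x : 0 <= v <= 1 -> 0 <= x <= 1 ->
  (v - (INR (S m) - 1) / INR (S m) * x) * x ^ m <= (v - (INR (S m) - 1) / INR (S m) * v) * v ^ m.
Proof.
  intros Hv Hx. pose proof (amgm m v x (proj1 Hv) (proj1 Hx)) as Ham.
  assert (HN : 1 <= INR (S m)) by (rewrite S_INR; pose proof (pos_INR m); lra).
  rewrite S_INR in *. simpl pow in Ham.
  apply Rmult_le_reg_l with (INR m + 1); [lra|].
  replace ((INR m + 1) * ((v - (INR m + 1 - 1) / (INR m + 1) * x) * x ^ m))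
    with ((INR m + 1) * v * x ^ m - INR m * (x * x ^ m)) by (field; lra).
  replace ((INR m + 1) * ((v - (INR m + 1 - 1) / (INR m + 1) * v) * v ^ m))
    with (v * v ^ m) by (field; lra).
  exact Ham.
Qed.

Lemma lim_const c D x0 : limit1_in (fun _ : R => c) D c x0.
Proof. intros e He. exists 1. split; [lra|]. intros. simpl. unfold R_dist. rewrite Rminus_diag, Rabs_R0. lra. Qed.

Lemma C1_comb a b F f G g t : C1_density_on a b F f -> C1_density_on a b G g ->
  C1_density_on a b (comb F G t) (fun x => t * f x + (1 - t) * g x).
Proof.
  intros [Fc [Fd Fl]] [Gc [Gd Gl]]. split; [|split].
  - intros x. apply comb_cont; auto.
  - intros x Hx. unfold comb.
    apply (derivable_pt_lim_plus (fun x => t * F x) (fun x => (1 - t) * G x)).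
    + apply (derivable_pt_lim_scal F t); auto.
    + apply (derivable_pt_lim_scal G (1 - t)); auto.
  - intros x Hx.
    apply (limit_plus (fun x => t * f x) (fun x => (1 - t) * g x)).
    + apply (limit_mul (fun _ => t) f); [apply lim_const|auto].
    + apply (limit_mul (fun _ => 1 - t) g); [apply lim_const|auto].
Qed.

Lemma clip_cdf a b h : a < b -> h a = 0 -> h b = 1 -> cdf_on a b (fun x => h (proj a b x)).
Proof.
  intros Hab Ha Hb. split; intros x Hx.
  - rewrite proj_lo by lra. auto.
  - rewrite proj_hi by lra. auto.
Qed.

Lemma clip_strict a b h : a < b -> (forall x y, a <= x -> x < y -> y <= b -> h x < h y) ->
  strictly_increasing_on a b (fun x => h (proj a b x)).
Proof.
  intros Hab Hh x y Hx Hxy Hy. rewrite !proj_id by lra. apply Hh; auto.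
Qed.

Lemma utility_id : utility_ok (fun z => z).
Proof.
  split; [auto|]. split; [intros; lra|]. split; [intros; lra|].
  exists (fun _ => 1), (fun _ => 0). intros x Hx. split; [apply derivable_pt_lim_id|].
  split; [lra|]. split; [apply derivable_pt_lim_const|lra].
Qed.

Lemma F01_C1 : C1_density_on 0 1 (proj 0 1) (fun _ => 1).
Proof.
  apply (clip_C1 0 1 (fun z => z) (fun _ => 1)); try lra.
  - intros. apply continuity_pt_id.
  - intros. apply derivable_pt_lim_id.
  - intros. apply continuity_pt_const. intros ? ?; auto.
Qed.

Lemma F01_pos : pos_density_cdf 0 1 (proj 0 1).
Proof.
  split; [apply (clip_cdf 0 1 (fun z => z)); lra|].
  exists (fun _ => 1). split; [apply F01_C1|]. intros; lra.
Qed.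

Lemma model1 : model_structure 0 1 (fun z => z) (proj 0 1) (fun q => q).
Proof.
  split; [lra|]. split; [apply utility_id|]. split; [apply F01_pos|].
  exists (fun F => F = proj 0 1), (proj 0 1).
  split; [|split; [|split; [|split; [|split; [|split; [|split]]]]]].
  - intros F ->. split; [apply F01_pos|]. split.
    + apply (clip_strict 0 1 (fun z => z)); intros; lra.
    + exists (fun _ => 1). apply F01_C1.
  - apply wc_single. intros; apply proj_cont; lra.
  - intros F G t -> -> _. apply functional_extensionality; intros; ring.
  - reflexivity.
  - reflexivity.
  - intros F -> x; lra.
  - apply F01_pos.
  - intros; reflexivity.
Qed.

Section M2.
Variable N : R.
Hypothesis HN : 2 <= N.

Definition F02 := fun x => h2 N (proj 0 (vh N) x).
Definition Fs2 := fun x => hs N (proj 0 (vh N) x).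
Definition D2 := fun q => hs N (N * q / (N + q)).

Lemma F02_C1 : C1_density_on 0 (vh N) F02 (f2 N).
Proof.
  pose proof (vh_bounds N HN).
  apply clip_C1; try lra.
  - intros; apply h2_cont; lra.
  - intros; apply is_derive_Reals, h2_derive; lra.
  - intros; apply f2_cont; lra.
Qed.

Lemma Fs2_C1 : C1_density_on 0 (vh N) Fs2 (fs N).
Proof.
  pose proof (vh_bounds N HN).
  apply clip_C1; try lra.
  - intros; apply hs_cont; lra.
  - intros; apply is_derive_Reals, hs_derive; lra.
  - intros; apply fs_cont; lra.
Qed.

Lemma F02_pos : pos_density_cdf 0 (vh N) F02.
Proof.
  pose proof (vh_bounds N HN).
  split; [apply clip_cdf; [lra|apply h2_0|apply h2_vh; lra]|].
  exists (f2 N). split; [apply F02_C1|]. intros; apply f2_pos; lra.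
Qed.

Lemma Fs2_pos : pos_density_cdf 0 (vh N) Fs2.
Proof.
  pose proof (vh_bounds N HN).
  split; [apply clip_cdf; [lra|apply hs0|apply hs_vh; lra]|].
  exists (fs N). split; [apply Fs2_C1|]. intros; apply fs_pos; lra.
Qed.

Lemma Fs2_le x : Fs2 x <= F02 x.
Proof.
  pose proof (vh_bounds N HN). unfold Fs2, F02.
  apply hs_le_h2; auto. apply proj_in; lra.
Qed.

Lemma Fs2_lt x : 0 < x < vh N -> Fs2 x < F02 x.
Proof.
  intros Hx. pose proof (vh_bounds N HN). unfold Fs2, F02.
  rewrite proj_id by lra. apply hs_le_h2; auto; lra.
Qed.

Lemma comb_strict t : 0 <= t <= 1 -> C1_strict_cdf 0 (vh N) (comb F02 Fs2 t).
Proof.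
  intros Ht. pose proof (vh_bounds N HN).
  destruct F02_pos as [[F1 F2] _]. destruct Fs2_pos as [[S1 S2] _].
  split; [split|split].
  - intros x Hx. unfold comb. rewrite F1, S1 by auto. ring.
  - intros x Hx. unfold comb. rewrite F2, S2 by auto. ring.
  - intros x y Hx Hxy Hy. unfold comb.
    assert (A : F02 x < F02 y) by (apply clip_strict; [lra| |auto..]; intros; apply h2_incr; auto).
    assert (B : Fs2 x < Fs2 y) by (apply clip_strict; [lra| |auto..]; intros; apply hs_incr; lra).
    assert (t * F02 x <= t * F02 y) by (apply Rmult_le_compat_l; lra).
    assert ((1 - t) * Fs2 x <= (1 - t) * Fs2 y) by (apply Rmult_le_compat_l; lra).
    destruct (Rle_lt_dec t 0).
    + assert ((1 - t) * Fs2 x < (1 - t) * Fs2 y) by (apply Rmult_lt_compat_l; lra). lra.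
    + assert (t * F02 x < t * F02 y) by (apply Rmult_lt_compat_l; lra). lra.
  - eexists. apply C1_comb; [apply F02_C1|apply Fs2_C1].
Qed.

Lemma model2 : model_structure 0 (vh N) (fun z => z) F02 D2.
Proof.
  pose proof (vh_bounds N HN).
  split; [lra|]. split; [apply utility_id|]. split; [apply F02_pos|].
  exists (seg F02 Fs2), Fs2.
  split; [|split; [|split; [|split; [|split; [|split; [|split]]]]]].
  - intros F [t [Ht ->]]. apply comb_strict; auto.
  - apply wc_seg; [lra| | |apply Fs2_lt].
    + apply F02_C1. + apply Fs2_C1.
  - apply seg_convex.
  - exists 1. split; [lra|]. apply functional_extensionality; intros; unfold comb; ring.
  - exists 0. split; [lra|]. apply functional_extensionality; intros; unfold comb; ring.
  - intros F [t [Ht ->]] x. unfold comb. pose proof (Fs2_le x).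
    assert (t * Fs2 x <= t * F02 x) by (apply Rmult_le_compat_l; lra). lra.
  - apply Fs2_pos.
  - intros x Hx. unfold D2, F02, Fs2. rewrite !proj_id by lra. f_equal.
    unfold h2. field. split; [lra|]. replace (N * (N - x) + N * x) with (N * N) by ring. assert (0 < N * N) by (apply Rmult_lt_0_compat; lra). lra.
Qed.
End M2.

Lemma D2_F02 N x : 2 <= N -> 0 <= x <= vh N -> D2 N (F02 N x) = hs N x.
Proof.
  intros HN Hx. pose proof (vh_bounds N HN). unfold D2, F02. rewrite !proj_id by lra. f_equal.
  unfold h2. field. split; [lra|]. replace (N * (N - x) + N * x) with (N * N) by ring.
  assert (0 < N * N) by (apply Rmult_lt_0_compat; lra). lra.
Qed.

Lemma h2_le N x y : 2 <= N -> 0 <= x -> x <= y -> y <= vh N -> h2 N x <= h2 N y.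
Proof.
  intros. destruct (Rle_lt_or_eq_dec x y H1) as [h|h].
  - left. apply h2_incr; auto.
  - subst; lra.
Qed.

Lemma bid_iff N b z : 2 <= N ->
  ((z = 0 \/ exists v, 0 <= v <= 1 /\ (N - 1) / N * v <= b /\ z = proj 0 1 v) <->
   (z = 0 \/ exists v, 0 <= v <= vh N /\ (N - 1) * v / (N - v) <= b /\ z = F02 N v)).
Proof.
  intros HN. pose proof (vh_bounds N HN). split.
  - intros [->|[v [Hv [Hb ->]]]]; [left; auto|right].
    exists (N * v / (N + v)).
    assert (Hv' : 0 <= N * v / (N + v) <= vh N).
    { split; [apply Rdiv_le_0_compat; [apply Rmult_le_pos|]; lra|].
      unfold vh. apply Rmult_le_reg_r with ((N + v) * (N + 1)); [apply Rmult_lt_0_compat; lra|].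
      replace (N * v / (N + v) * ((N + v) * (N + 1))) with (N * v * (N + 1)) by (field; lra).
      replace (N / (N + 1) * ((N + v) * (N + 1))) with (N * (N + v)) by (field; lra).
      assert (0 <= N * N * (1 - v)) by (apply Rmult_le_pos; [apply Rmult_le_pos|]; lra). lra. }
    split; auto. split.
    + replace ((N - 1) * (N * v / (N + v)) / (N - N * v / (N + v))) with ((N - 1) / N * v); auto.
      field. split; [lra|]. replace (N * (N + v) - N * v) with (N * N) by ring.
      assert (0 < N * N) by (apply Rmult_lt_0_compat; lra). lra.
    + unfold F02. rewrite !proj_id by lra. unfold h2. field. split; [lra|].
      replace (N * (N + v) - N * v) with (N * N) by ring.
      assert (0 < N * N) by (apply Rmult_lt_0_compat; lra). lra.
  - intros [->|[v [Hv [Hb ->]]]]; [left; auto|right].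
    exists (h2 N v).
    assert (Hq : 0 <= h2 N v <= 1).
    { rewrite <- (h2_0 N), <- (h2_vh N HN). split; apply h2_le; lra. }
    split; auto. split.
    + replace ((N - 1) / N * h2 N v) with ((N - 1) * v / (N - v)); auto. unfold h2. field. lra.
    + unfold F02. rewrite !proj_id by lra. reflexivity.
Qed.

Theorem proposition1 (n : nat) (hn : (2 <= n)%nat) :
  exists (vl vh : R) (u F0 D beta : R -> R)
         (vl' vh' : R) (u' F0' D' beta' : R -> R),
    model_structure vl vh u F0 D /\
    model_structure vl' vh' u' F0' D' /\
    F0 <> F0' /\
    sym_equilibrium n vl vh u F0 D beta /\
    sym_equilibrium n vl' vh' u' F0' D' beta' /\
    (forall b g g', bid_cdf_value vl vh F0 beta b g ->
                    bid_cdf_value vl' vh' F0' beta' b g' -> g = g').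
Proof.
  destruct n as [|[|k]]; [exfalso; inversion hn|exfalso; inversion hn; inversion H0|].
  set (N := INR (S (S k))).
  assert (HN : 2 <= N) by (unfold N; rewrite !S_INR; pose proof (pos_INR k); lra).
  pose proof (vh_bounds N HN) as Hvh.
  exists 0, 1, (fun z => z), (proj 0 1), (fun q => q), (fun x => (N - 1) / N * x).
  exists 0, (vh N), (fun z => z), (F02 N), (D2 N), (fun x => (N - 1) * x / (N - x)).
  split; [apply model1|]. split; [apply model2; auto|]. split; [|split; [|split]].
  - intros Heq. apply (f_equal (fun f => f (1/2))) in Heq.
    assert (Hh : 1/2 <= vh N).
    { unfold vh. apply Rmult_le_reg_r with (N + 1); [lra|].
      replace (N / (N + 1) * (N + 1)) with N by (field; lra). lra. }
    unfold F02 in Heq. rewrite !proj_id in Heq by lra. unfold h2 in Heq.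
    assert (E : 1/2 * (N - 1/2) = N * (1/2)) by (rewrite Heq at 1; field; lra). lra.
  - split.
    + intros x y Hx Hxy Hy. apply Rmult_lt_compat_l; auto. apply Rdiv_lt_0_compat; lra.
    + intros v x Hv Hx. simpl (S (S k) - 1)%nat. rewrite !proj_id by lra.
      apply eq1; auto.
  - split.
    + intros x y Hx Hxy Hy. apply frac_lt; try lra.
      assert (0 < (N - 1) * N * (y - x)) by (apply Rmult_lt_0_compat; [apply Rmult_lt_0_compat|]; lra). lra.
    + intros v x Hv Hx. simpl (S (S k) - 1)%nat. rewrite !D2_F02 by auto.
      apply eq2; auto. apply le_n_S, Nat.le_0_l.
  - intros b g g' H1 H2. eapply lub_unique; [|exact H1|exact H2].
    intros z. apply bid_iff; auto.
Qed.
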